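(* Let $q$ be a prime power, $1\le k\le n-1$, and let $\mathcal{L}$ be a set of affine $k$-spaces of $\mathrm{AG}(n,q)$ with $|\mathcal{L}|=x\left[{n\atop k}\right]_q$ such that $|\mathcal{L}\cap\mathcal{S}|=x$ for every $k$-spread $\mathcal{S}$ of $\mathrm{AG}(n,q)$. Let $\tau_A$ be an arbitrary affine subspace of $\mathrm{AG}(n,q)$ of dimension $i\ge\max\{k+1,3\}$, regarded as the affine space $\mathrm{AG}(i,q)$, and let $[\tau_A]_k$ be the set of affine $k$-spaces contained in $\tau_A$. Then, with $c=|\mathcal{L}\cap[\tau_A]_k|/\left[{i\atop k}\right]_q$, every $k$-spread $\mathcal{S}$ of $\tau_A$ satisfies $|(\mathcal{L}\cap[\tau_A]_k)\cap\mathcal{S}|=c$.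
   Context: $\mathrm{AG}(n,q)$ is $\mathrm{PG}(n,q)$ with a hyperplane $\pi_\infty$ removed; affine points are points outside $\pi_\infty$, affine $k$-spaces are $k$-dimensional projective subspaces not contained in $\pi_\infty$. A $k$-spread of an affine space is a set of its affine $k$-spaces that pairwise share no affine point and cover all its affine points. $\left[{a\atop b}\right]_q=\frac{(q^a-1)\cdots(q^{a-b+1}-1)}{(q^b-1)\cdots(q-1)}$. *)

(* Defs.v *)
(* AG(n,q) is modelled as the row space 'rV[F]_n over a finite
   field F with #|F| = q (so q is automatically a prime power). *)
From mathcomp Require Import all_boot all_order all_algebra.
Set Implicit Arguments. Unset Strict Implicit. Unset Printing Implicit Defensive.
Import GRing.Theory.
Local Open Scope ring_scope.

(* Gaussian binomial [a over b]_q (exact division in nat). *)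
Definition qbinom (q a b : nat) : nat :=
  ((\prod_(j < b) (q ^ (a - j) - 1)) %/ (\prod_(j < b) (q ^ j.+1 - 1)))%N.

Definition is_flat (F : finFieldType) (n k : nat) (A : {set 'rV[F]_n}) : bool :=
  [exists v : 'rV[F]_n, exists U : 'M[F]_n,
     (\rank U == k) && (A == [set x | (x - v <= U)%MS])].

Definition kflats (F : finFieldType) (n k : nat) (T : {set 'rV[F]_n})
  : {set {set 'rV[F]_n}} :=
  [set A : {set 'rV[F]_n} | is_flat k A & A \subset T].

Definition is_spread (F : finFieldType) (n k : nat) (T : {set 'rV[F]_n})
  (S : {set {set 'rV[F]_n}}) : Prop :=
  [/\ S \subset kflats k T,
      (forall A B, A \in S -> B \in S -> A != B -> [disjoint A & B])
    & cover S = T].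

(* Main.v *)
Require Import Defs.
From mathcomp Require Import all_boot all_order all_algebra zify.
Set Implicit Arguments. Unset Strict Implicit. Unset Printing Implicit Defensive.

Lemma prodP_split q i k : k <= i ->
  \prod_(j < k) (q ^ i - q ^ j) = \prod_(j < k) q ^ j * \prod_(j < k) (q ^ (i - j) - 1).
Proof.
move=> hk; rewrite -big_split /=; apply: eq_bigr => j _.
by rewrite mulnBr muln1 -expnD subnKC // ltnW // (leq_trans (ltn_ord j)).
Qed.

Lemma qbinom_eq q i k c : 1 < q -> k <= i ->
  c * \prod_(j < k) (q ^ k - q ^ j) = \prod_(j < k) (q ^ i - q ^ j) ->
  qbinom q i k = c.
Proof.
move=> hq hk; rewrite !prodP_split //.
have hQ : 0 < \prod_(j < k) q ^ j by apply: prodn_gt0 => j; rewrite expn_gt0 ltnW.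
have -> : \prod_(j < k) (q ^ (k - j) - 1) = \prod_(j < k) (q ^ j.+1 - 1).
  rewrite (reindex_inj rev_ord_inj) /=; apply: eq_bigr => j _.
  by rewrite subKn.
have hB : 0 < \prod_(j < k) (q ^ j.+1 - 1).
  apply: prodn_gt0 => j; rewrite subn_gt0 -(exp1n j.+1) ltn_exp2r //.
rewrite mulnCA => /eqP; rewrite eqn_pmul2l // => /eqP H.
by rewrite /qbinom -H mulnK.
Qed.

Import GRing.Theory.
Local Open Scope ring_scope.

Section Aff.
Variables (F : finFieldType) (n : nat).
Implicit Types (A B T : {set 'rV[F]_n}) (U W : 'M[F]_n).

Lemma subB_sub m (a b : 'rV[F]_n) (U : 'M[F]_(m, n)) :
  (a <= U)%MS -> (b <= U)%MS -> (a - b <= U)%MS.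
Proof. by move=> ha hb; apply: addmx_sub ha _; rewrite (eqmx_opp b). Qed.

Definition flat_of (v : 'rV[F]_n) (U : 'M[F]_n) : {set 'rV[F]_n} :=
  [set x | (x - v <= U)%MS].
Definition dir A : {set 'rV[F]_n} := [set x - y | x in A, y in A].
Definition spanm m (U : 'M[F]_(m, n)) : {set 'rV[F]_n} := [set d | (d <= U)%MS].

Lemma dir_flat v U : dir (flat_of v U) = spanm U.
Proof.
apply/setP => d; rewrite inE; apply/imset2P/idP.
- move=> [x y]; rewrite !inE => hx hy ->.
  by have := subB_sub hx hy; rewrite opprB addrA subrK.
- move=> hd; exists (d + v) v; rewrite ?inE ?addrK ?subrr ?sub0mx //.
Qed.

Lemma flat_memE v U z x : z \in flat_of v U ->
  (x \in flat_of v U) = (x - z <= U)%MS.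
Proof.
rewrite !inE => hz; apply/idP/idP => h.
- by have := subB_sub h hz; rewrite opprB addrA subrK.
- by have := addmx_sub h hz; rewrite addrA subrK.
Qed.

Lemma flat_eq v U v' U' z : z \in flat_of v U -> z \in flat_of v' U' ->
  spanm U = spanm U' -> flat_of v U = flat_of v' U'.
Proof.
move=> hz hz' hs; apply/setP => x; rewrite (flat_memE _ hz) (flat_memE _ hz').
by move/setP: hs => /(_ (x - z)); rewrite !inE.
Qed.

Lemma flat_self v U : v \in flat_of v U.
Proof. by rewrite inE subrr sub0mx. Qed.


Lemma is_flatE (k : nat) A : is_flat k A ->
  exists v U, \rank U = k /\ A = flat_of v U.
Proof.
by case/existsP => v /existsP [U /andP [/eqP hr /eqP hA]]; exists v, U.
Qed.

Lemma flat_ofP (k : nat) v U : \rank U = k -> is_flat k (flat_of v U).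
Proof. by move=> hr; apply/existsP; exists v; apply/existsP; exists U; rewrite hr !eqxx. Qed.

Lemma flat_sub v U v' U' : v' \in flat_of v U -> (U' <= U)%MS ->
  flat_of v' U' \subset flat_of v U.
Proof.
move=> hv' hU; apply/subsetP => x; rewrite (flat_memE _ hv') inE.
by move=> h; apply: submx_trans hU.
Qed.

Lemma kflats_tau (k : nat) v0 U0 A : A \in kflats k (flat_of v0 U0) ->
  exists v W, [/\ \rank W = k, (W <= U0)%MS & A = flat_of v W].
Proof.
rewrite inE => /andP [/is_flatE [v [W [hr hA]]] hsub].
exists v, W; split => //; apply/row_subP => j.
have hv : v \in flat_of v0 U0 by apply: (subsetP hsub); rewrite hA flat_self.
have hw : v + row j W \in flat_of v0 U0.
  by apply: (subsetP hsub); rewrite hA inE [v + _]addrC addrK row_sub.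
by rewrite (flat_memE _ hv) [v + _]addrC addrK in hw.
Qed.

Definition parcl (k : nat) T (W : 'M[F]_n) := [set A in kflats k T | dir A == spanm W].

Lemma par_spread (k : nat) v0 U0 W : \rank W = k -> (W <= U0)%MS ->
  is_spread k (flat_of v0 U0) (parcl k (flat_of v0 U0) W).
Proof.
move=> hr hW; split.
- by apply/subsetP => A; rewrite inE => /andP [].
- move=> A B /setIdP [hA /eqP dA] /setIdP [hB /eqP dB] hAB.
  apply/pred0P => z /=; apply/negbTE/negP => /andP [zA zB].
  move/negP: hAB; apply; apply/eqP.
  case: (kflats_tau hA) => v [U [_ _ eA]].
  case: (kflats_tau hB) => v' [U' [_ _ eB]].
  rewrite eA eB in zA zB dA dB *; apply: flat_eq zA zB _.
  by rewrite -(dir_flat v) -(dir_flat v') dA dB.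
- apply/setP => z; apply/bigcupP/idP.
  + move=> [A] /setIdP [hA _] zA.
    by rewrite inE in hA; case/andP: hA => _ /subsetP; apply.
  + move=> hz; exists (flat_of z W); last by rewrite flat_self.
    rewrite !inE flat_ofP //= dir_flat eqxx andbT.
    by apply: flat_sub.
Qed.

End Aff.

Section Count.
Variables (F : finFieldType) (n : nat).

Lemma card_span m (U : 'M[F]_(m,n)) : #|spanm U| = (#|F| ^ \rank U)%N.
Proof.
have -> : spanm U = [set w *m row_base U | w in [set: 'rV[F]_(\rank U)]].
  apply/setP => d; rewrite inE; apply/idP/imsetP.
  - rewrite -(eq_row_base U) => /submxP [w ->]; by exists w; rewrite ?inE.
  - move=> [w _ ->]; rewrite -(eq_row_base U); exact: submxMl.
rewrite card_imset; last exact: row_free_inj (row_base_free U).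
by rewrite cardsT card_mx mul1n.
Qed.

Lemma rank_add_row (v : 'rV[F]_n) m (B : 'M[F]_(m,n)) : \rank B = m ->
  (\rank (v + B)%MS == m.+1) = ~~ (v <= B)%MS.
Proof.
move=> hB; case: (boolP (v <= B)%MS) => hv.
- have e : (v + B == B)%MS by rewrite /eqmx addsmx_sub hv submx_refl addsmxSr.
  by rewrite (eqmx_rank e) hB eqn_leq ltnn andbF.
- have := mxrank_leqif_sup (addsmxSr v B).
  rewrite addsmx_sub (negbTE hv) /= => /ltn_leqif hlt.
  have [h _] := mxrank_adds_leqif v B.
  have hv1 := rank_leq_row v.
  rewrite eqn_leq; apply/andP; split; last by move: hlt; rewrite hB.
  apply: leq_trans h _; rewrite hB.
  by rewrite -[m.+1]add1n leq_add2r.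
Qed.


Definition frs p (U : 'M[F]_(p,n)) m :=
  [set A : 'M[F]_(m,n) | (\rank A == m) && (A <= U)%MS].

Lemma card_frs p (U : 'M[F]_(p,n)) m :
  #|frs U m| = (\prod_(j < m) (#|F| ^ \rank U - #|F| ^ j))%N.
Proof.
elim: m => [|m IH].
  rewrite big_ord0 -(cards1 (0 : 'M[F]_(0,n))); apply: eq_card => A.
  by rewrite !inE flatmx0 mxrank0 sub0mx !eqxx.
rewrite big_ord_recr /= -IH -[#|frs U m.+1|]sum1_card.
rewrite (partition_big (@dsubmx F 1 m n) (mem (frs U m))) /=; last first.
  move=> A; rewrite !inE => /andP [hr hs].
  have eA := @vsubmxK _ 1 m n A.
  rewrite -eA in hs; move: hs; rewrite (col_mx_sub (usubmx A) (dsubmx A) U) => hs; case/andP: hs => _ ->; rewrite andbT.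
  rewrite -eA in hr.
  rewrite eqn_leq rank_leq_row /=.
  move: hr; rewrite -(addsmxE (usubmx A) (dsubmx A)) => /eqP hr.
  have [h _] := mxrank_adds_leqif (usubmx A) (dsubmx A).
  have hv1 := rank_leq_row (usubmx A).
  rewrite hr in h; lia.
rewrite -sum_nat_const; apply: eq_bigr => B; rewrite inE => /andP [/eqP hB hBU].
have <- : #|spanm U :\: spanm B| = (#|F| ^ \rank U - #|F| ^ m)%N.
  rewrite cardsD (setIidPr _) ?card_span ?hB //.
  by apply/subsetP => d; rewrite !inE => /submx_trans; apply.
rewrite (reindex (fun v : 'rV_n => (col_mx v B : 'M_(1+m,n)))) /=; last first.
  exists usubmx => [v _ | A]; first by rewrite col_mxKu.
  by rewrite inE => /andP [_ /eqP <-]; rewrite vsubmxK.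
rewrite -sum1_card; apply: eq_bigl => v.
rewrite !inE col_mxKd eqxx andbT -(addsmxE v B) (col_mx_sub v B U).
by rewrite rank_add_row // hBU andbT andbC.
Qed.


Definition dirs p (U : 'M[F]_(p,n)) k := [set spanm A | A in frs U k].

Lemma card_dirs p (U : 'M[F]_(p,n)) k :
  #|frs U k| = (#|dirs U k| * \prod_(j < k) (#|F| ^ k - #|F| ^ j))%N.
Proof.
rewrite -sum1_card (partition_big (@spanm F n k) (mem (dirs U k))) /=; last first.
  by move=> A hA; apply: imset_f.
rewrite -sum_nat_const; apply: eq_bigr => D /imsetP [A0 hA0 ->].
move: (hA0); rewrite inE => /andP [/eqP hr0 hs0].
transitivity #|frs A0 k|; last by rewrite card_frs hr0.
rewrite -sum1_card; apply: eq_bigl => A.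
rewrite !inE; apply/idP/idP.
- case/andP => /andP [hr hs] /eqP he; rewrite hr /=.
  apply/row_subP => j; have : row j A \in spanm A by rewrite inE row_sub.
  by rewrite he inE.
- case/andP => /eqP hr hs.
  have e : (A == A0)%MS.
    by have := mxrank_leqif_eq hs; rewrite hr hr0 => -[_]; rewrite eqxx => <-.
  rewrite hr eqxx (submx_trans hs hs0) /=; apply/eqP/setP => d.
  by rewrite !inE (eqmxP e).
Qed.

End Count.

Section Main.
Variables (F : finFieldType) (n : nat).

Lemma flat_setT : flat_of (0 : 'rV[F]_n) 1%:M = [set: 'rV[F]_n].
Proof. by apply/setP => x; rewrite !inE submx1. Qed.

Lemma dirs_eq (k : nat) (v0 : 'rV[F]_n) (U0 : 'M[F]_n) :
  (@dir F n) @: kflats k (flat_of v0 U0) = dirs U0 k.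
Proof.
apply/setP => D; apply/imsetP/imsetP.
- move=> [A hA ->]; case: (kflats_tau hA) => v [W [hr hW ->]].
  exists (castmx (hr, erefl n) (row_base W)).
    rewrite inE; apply/andP; split.
      by rewrite (eqmx_cast _ (hr, erefl n)) eq_row_base hr.
    by rewrite (eqmx_cast _ (hr, erefl n)) eq_row_base.
  rewrite dir_flat; apply/setP => d; rewrite !inE.
  by rewrite (eqmx_cast _ (hr, erefl n)) eq_row_base.
- move=> [A]; rewrite inE => /andP [/eqP hr hs] ->.
  exists (flat_of v0 <<A>>%MS).
    rewrite inE flat_ofP ?mxrank_gen //=; apply: flat_sub (flat_self _ _) _.
    by rewrite genmxE.
  by rewrite dir_flat; apply/setP => d; rewrite !inE genmxE.
Qed.


Lemma par_inside (k : nat) (v0 : 'rV[F]_n) U0 W0 B z :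
  (W0 <= U0)%MS -> B \in parcl k [set: 'rV[F]_n] W0 -> z \in B ->
  z \in flat_of v0 U0 -> B \subset flat_of v0 U0.
Proof.
move=> hW /setIdP [hB /eqP dB] zB ztau.
rewrite inE in hB; case/andP: hB => /is_flatE [v [W [_ eB]]] _.
rewrite eB in zB dB *; rewrite dir_flat in dB.
rewrite (flat_eq zB (flat_self z W0) dB); exact: flat_sub.
Qed.

Lemma ext_spread (k : nat) (v0 : 'rV[F]_n) U0 W0 S :
  \rank W0 = k -> (W0 <= U0)%MS -> is_spread k (flat_of v0 U0) S ->
  is_spread k [set: 'rV[F]_n]
    (S :|: [set B in parcl k [set: 'rV[F]_n] W0 | ~~ (B \subset flat_of v0 U0)]).
Proof.
move=> hr hW [hS1 hS2 hS3].
have [hQ1 hQ2 hQ3] := par_spread (0 : 'rV[F]_n) hr (submx1 W0).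
rewrite flat_setT in hQ1 hQ2 hQ3.
have inS : forall A, A \in S -> A \subset flat_of v0 U0.
  move=> A /(subsetP hS1); rewrite inE => /andP [_ ->] //.
split.
- apply/subsetP => A; rewrite inE => /orP [/(subsetP hS1)|].
  + by rewrite !inE => /andP [-> _]; rewrite subsetT.
  + by case/setIdP => /(subsetP hQ1).
- have mix : forall A B, A \in S -> B \in [set B in parcl k [set: 'rV[F]_n] W0 | ~~ (B \subset flat_of v0 U0)] -> [disjoint A & B].
    move=> A B hA /setIdP [hB hnot].
    apply/pred0P => z /=; apply/negbTE/negP => /andP [zA zB].
    by move/negP: hnot; apply; apply: par_inside hB zB (subsetP (inS A hA) z zA).
  move=> A B; rewrite !in_setU => /orP [hA|hA] /orP [hB|hB] hAB.
  + exact: hS2.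
  + exact: mix.
  + by rewrite disjoint_sym; apply: mix.
  + by case/setIdP: hA => hA _; case/setIdP: hB => hB _; apply: hQ2.
- apply/setP => z; rewrite inE; apply/bigcupP.
  case: (boolP (z \in flat_of v0 U0)) => hz.
  + rewrite -hS3 in hz; case/bigcupP: hz => A hA zA.
    by exists A; rewrite // inE hA.
  + have : z \in cover (parcl k [set: 'rV[F]_n] W0) by rewrite hQ3 inE.
    case/bigcupP => B hB zB; exists B => //.
    rewrite in_setU; apply/orP; right; rewrite inE hB /=; apply/negP => /subsetP /(_ z zB).
    by rewrite (negbTE hz).
Qed.

End Main.

Theorem theorem3p8 (F : finFieldType) (n k i x : nat)
  (L : {set {set 'rV[F]_n}}) (tau : {set 'rV[F]_n}) :
  (1 <= k)%N -> (k <= n - 1)%N ->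
  L \subset kflats k [set: 'rV[F]_n] ->
  #|L| = (x * qbinom #|F| n k)%N ->
  (forall S, is_spread k [set: 'rV[F]_n] S -> #|L :&: S| = x) ->
  is_flat i tau -> (maxn k.+1 3 <= i)%N ->
  forall S, is_spread k tau S ->
    (#|(L :&: kflats k tau) :&: S|%:R : rat)
      = #|L :&: kflats k tau|%:R / (qbinom #|F| i k)%:R.
Proof.
move=> _ _ _ _ hx htau hi S hS.
have hki : (k <= i)%N by move: hi; rewrite geq_max => /andP [h _]; exact: ltnW.
case: (is_flatE htau) => v0 [U0 [hr0 etau]]; subst tau.
have hq : (1 < #|F|)%N := card_finNzRing_gt1 F.
have : (0 < #|frs U0 k|)%N.
  rewrite card_frs hr0; apply: prodn_gt0 => j.
  by rewrite subn_gt0 ltn_exp2l // (leq_trans (ltn_ord j)).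
case/card_gt0P => A0 hA0; move: (hA0); rewrite inE => /andP [/eqP hrA0 hA0U].
pose W0 := (<<A0>>%MS : 'M[F]_n).
have hrW0 : \rank W0 = k by rewrite mxrank_gen.
have hW0U : (W0 <= U0)%MS by rewrite genmxE.
pose T := [set B in parcl k [set: 'rV[F]_n] W0 | ~~ (B \subset flat_of v0 U0)].
pose c := (x - #|L :&: T|)%N.
have hc : forall S', is_spread k (flat_of v0 U0) S' ->
    #|(L :&: kflats k (flat_of v0 U0)) :&: S'| = c.
  move=> S' hS'; have := hx _ (ext_spread hrW0 hW0U hS').
  have e1 : (L :&: kflats k (flat_of v0 U0)) :&: S' = L :&: S'.
    case: hS' => hS1 _ _; by rewrite -setIA (setIidPr hS1).
  have e2 : (L :&: S') :&: (L :&: T) = set0.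
    apply/setP => B; rewrite !in_setI in_set0; apply/negbTE.
    apply/negP => /andP [/andP [_ hB] /andP [_ hT]]; move/setIdP: hT => [_ hn].
    case: hS' => hS1 _ _; move/(subsetP hS1): hB; rewrite inE => /andP [_ hsub].
    by rewrite hsub in hn.
  by rewrite e1 setIUr cardsU e2 cards0 subn0 /c => <-; rewrite addnK.
have hM : #|L :&: kflats k (flat_of v0 U0)| = (#|dirs U0 k| * c)%N.
  rewrite -(dirs_eq k v0) -sum1_card.
  rewrite (partition_big (@dir F n) (mem ((@dir F n) @: kflats k (flat_of v0 U0)))) /=; last first.
    by move=> A /setIP [_ hA]; apply: imset_f.
  rewrite -sum_nat_const; apply: eq_bigr => D /imsetP [A1 hA1 ->].
  case: (kflats_tau hA1) => v [W [hrW hWU ->]]; rewrite dir_flat.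
  rewrite -(hc _ (par_spread v0 hrW hWU)) -sum1_card; apply: eq_bigl => A.
  rewrite [in RHS]in_setI [A \in parcl _ _ _]inE.
  by case: (boolP (A \in _)) => //= /setIP [_ ->].
have hd : qbinom #|F| i k = #|dirs U0 k|.
  by apply: qbinom_eq hq hki _; rewrite -card_dirs card_frs hr0.
have hdpos : (0 < #|dirs U0 k|)%N.
  by apply/card_gt0P; exists (spanm A0); apply: imset_f.
by rewrite hc // hM hd natrM mulrC mulKf // Num.Theory.pnatr_eq0 -lt0n hdpos.
Qed.
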